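(* Let $L=\sum_{k=1}^m P_{n_k}$ be a linear forest and $n$ a positive integer. If $L\in\operatorname{obs}(P_n)$, then: (1) $m_1\le 1$; (2) $n_k\in\{1,2,4,6\}$ for all $k\in\{1,\dots,m\}$; (3) if $n_k\in\{4,6\}$ for some $k$, then $m_1=1$.
   Context: All graphs are finite, simple and loopless. $P_n$ denotes the path on $n$ vertices ($P_1=K_1$, $P_2=K_2$). A linear forest is a disjoint union of paths; $\sum_{k=1}^m P_{n_k}$ denotes the linear forest whose $k$-th component is the path on $n_k$ vertices, and $m_i$ denotes the number of indices $k$ with $n_k=i$. A full-homomorphism $\varphi\colon G\to H$ is a map $V(G)\to V(H)$ such that for all $x,y\in V(G)$, $xy\in E(G)$ if and only if $\varphi(x)\varphi(y)\in E(H)$. A full $H$-colouring of $G$ is a full-homomorphism $G\to H$. A minimal $H$-obstruction is a graph $G$ that admits no full $H$-colouring while every proper induced subgraph of $G$ admits one; $\operatorname{obs}(H)$ denotes the set of minimal $H$-obstructions (up to isomorphism). *)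

(* Defs.v *)
(* Simple graphs = symmetric irreflexive boolean relations on a finType. *)
From mathcomp Require Import all_boot.
Set Implicit Arguments. Unset Strict Implicit. Unset Printing Implicit Defensive.

Definition full_hom (V W : finType) (e : rel V) (h : rel W) (f : V -> W) : Prop :=
  forall x y : V, e x y = h (f x) (f y).

Definition full_colourable (V W : finType) (e : rel V) (h : rel W) : Prop :=
  exists f : V -> W, full_hom e h f.

Definition induced (V : finType) (e : rel V) (S : {set V}) : rel (sig (fun x : V => x \in S)) :=
  fun x y => e (val x) (val y).

Definition min_obstruction (V W : finType) (e : rel V) (h : rel W) : Prop :=
  ~ full_colourable e h /\
  forall S : {set V}, S \proper [set: V] -> full_colourable (@induced V e S) h.

Definition path_rel (n : nat) : rel 'I_n :=
  fun i j => (i.+1 == j :> nat) || (j.+1 == i :> nat).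

(* The linear forest sum_{k<m} P_{ns k}: vertices are pairs (k, i), i < ns k. *)
Definition forest_rel (m : nat) (ns : 'I_m -> nat) : rel {k : 'I_m & 'I_(ns k)} :=
  fun x y => (tag x == tag y) &&
    (((tagged x).+1 == tagged y :> nat) || ((tagged y).+1 == tagged x :> nat)).

Definition mult (m : nat) (ns : 'I_m -> nat) (i : nat) : nat :=
  #|[set k : 'I_m | ns k == i]|.
Arguments forest_rel : clear implicits.
Arguments induced : clear implicits.
Arguments path_rel : clear implicits.

(* Main.v *)
Require Import Defs.
From mathcomp Require Import all_boot.
From mathcomp Require Import zify.
Set Implicit Arguments. Unset Strict Implicit. Unset Printing Implicit Defensive.

Lemma beq_iff (b1 b2 : bool) : b1 = b2 -> (b1 <-> b2). Proof. by move->. Qed.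

Lemma ext_hom (V W : finType) (e : rel V) (h : rel W) (S : {set V}) (w0 : W) :
  full_colourable (induced V e S) h ->
  exists g : V -> W, forall x y, x \in S -> y \in S -> e x y = h (g x) (g y).
Proof.
case=> f hf; exists (fun x => oapp f w0 (insub x)) => x y Hx Hy.
have Ex : insub x = Some (exist (fun x => x \in S) x Hx) := @insubT V (fun z => z \in S) _ x Hx.
have Ey : insub y = Some (exist (fun x => x \in S) y Hy) := @insubT V (fun z => z \in S) _ y Hy.
by rewrite Ex Ey /= -hf.
Qed.

Lemma twin_ext (V W : finType) (e : rel V) (h : rel W) (u v : V) :
  (forall x, e x x = false) -> (forall x y, e x y = e y x) ->
  (forall p, h p p = false) -> (forall p q, h p q = h q p) ->
  u != v -> (forall y, y != v -> e v y = e u y) ->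
  full_colourable (induced V e (setT :\ v)) h -> full_colourable e h.
Proof.
move=> irr sym hirr hsym uv tw Hc.
have Hu : u \in setT :\ v by rewrite !inE uv.
case: (Hc) => f _.
have [g hg] := ext_hom (f (Sub u Hu)) Hc.
exists (fun x => if x == v then g u else g x) => x y.
case: (eqVneq x v) => [->|xv]; case: (eqVneq y v) => [->|yv].
- by rewrite irr hirr.
- by rewrite tw // hg // !inE ?yv ?uv.
- by rewrite sym tw // sym hg // !inE ?xv ?uv.
- by rewrite hg // !inE ?xv ?yv.
Qed.

Definition cc (j : nat) := if j == 3 then 3 else j.+1.

Lemma twin_arith (N i j a : nat) (hv : bool) :
  (forall p, p < N -> ~~ (hv && (p == a)) ->
     ((i.+1 == p) || (p.+1 == i)) = ((j.+1 == p) || (p.+1 == j))) ->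
  i < N -> j < N -> (hv -> i != a) -> (hv -> j != a) -> i != j ->
  (hv -> (N == 4) && (a == 2) || (N == 6) && (a == 1) || (4 < N) && (N != 6) && (a == 2)) ->
  ~~ hv /\ N = 3 /\ (i = 2 \/ j = 2).
Proof.
move=> H hi hj ha hb hij hc.
have P1 : i.+1 < N -> ~~ (hv && (i.+1 == a)) -> j = i.+2.
  move=> x y; move: (H _ x y); rewrite eqxx /= => /esym/orP [] /eqP; lia.
have P3 : j.+1 < N -> ~~ (hv && (j.+1 == a)) -> i = j.+2.
  move=> x y; move: (H _ x y); rewrite eqxx /= => /orP [] /eqP; lia.
have P2 : 0 < i -> ~~ (hv && (i.-1 == a)) -> j.+2 = i.
  move=> x y; have x' : i.-1 < N by lia.
  move: (H _ x' y); rewrite prednK // eqxx orbT => /esym/orP [] /eqP; lia.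
have P4 : 0 < j -> ~~ (hv && (j.-1 == a)) -> i.+2 = j.
  move=> x y; have x' : j.-1 < N by lia.
  move: (H _ x' y); rewrite prednK // eqxx orbT => /orP [] /eqP; lia.
case: hv {H} P1 P2 P3 P4 ha hb hc => /= P1 P2 P3 P4 ha hb hc.
- have := ha isT; have := hb isT; have := hc isT; lia.
- lia.
Qed.

Lemma iso_arith (N a j : nat) :
  (j.+1 < N -> j.+1 != a -> False) -> (0 < j -> j.-1 != a -> False) -> j < N -> j != a ->
  (N == 4) && (a == 2) || (N == 6) && (a == 1) || (4 < N) && (N != 6) && (a == 2) ->
  (N == 4) || (N == 6).
Proof. lia. Qed.

Section Forest.
Variables (m : nat) (ns : 'I_m -> nat).
Hypothesis hpos : forall k, 0 < ns k.
Local Notation V := {k : 'I_m & 'I_(ns k)}.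
Local Notation e := (forest_rel m ns).

Definition idx (x : V) : nat := tagged x.

Lemma vx_eq (x y : V) : tag x = tag y -> idx x = idx y -> x = y.
Proof.
case: x => k i; case: y => k' j /= ek; subst k' => eij.
by congr existT; apply: val_inj.
Qed.

Lemma idx_lt (x : V) : idx x < ns (tag x).
Proof. exact: ltn_ord. Qed.

Definition mkv (k : 'I_m) (j : nat) : V :=
  existT (fun k => 'I_(ns k)) k (insubd (Ordinal (hpos k)) j).

Lemma mkv_tag k j : tag (mkv k j) = k. Proof. by []. Qed.
Lemma mkv_idx k j : j < ns k -> idx (mkv k j) = j.
Proof. by move=> hj; rewrite /idx /mkv /= val_insubd hj. Qed.

Lemma eE x y : e x y = (tag x == tag y) && (((idx x).+1 == idx y) || ((idx y).+1 == idx x)).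
Proof. by []. Qed.

Lemma e_irr x : e x x = false.
Proof. rewrite eE; apply/negbTE; lia. Qed.

Lemma e_sym x y : e x y = e y x.
Proof. by rewrite !eE eq_sym orbC. Qed.

Lemma e_mkv x k p : p < ns k ->
  e x (mkv k p) = (tag x == k) && (((idx x).+1 == p) || (p.+1 == idx x)).
Proof. by move=> hp; rewrite eE mkv_idx. Qed.

Lemma pr_irr n p : path_rel n p p = false.
Proof. rewrite /path_rel; apply/negbTE; lia. Qed.

Lemma pr_sym n p q : path_rel n p q = path_rel n q p.
Proof. by rewrite /path_rel orbC. Qed.

End Forest.

Section Count.
Variables (m : nat) (ns : 'I_m -> nat).
Hypothesis hpos : forall k, 0 < ns k.
Local Notation V := {k : 'I_m & 'I_(ns k)}.
Local Notation e := (forest_rel m ns).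
Local Notation mkv := (mkv hpos).
Variables (n : nat) (k0 : 'I_m) (i0 : nat).
Hypothesis hk0 : (ns k0 == 4) && (i0 == 2) || (ns k0 == 6) && (i0 == 1) || (4 < ns k0) && (ns k0 != 6) && (i0 == 2).
Hypothesis hmult : forall k k', ns k = 1 -> ns k' = 1 -> k = k'.
Hypothesis hiso : (ns k0 == 4) || (ns k0 == 6) -> forall k, ns k != 1.
Variable g : V -> 'I_n.
Local Notation v := (mkv k0 i0).
Hypothesis hg : forall x y, x != v -> y != v -> e x y = path_rel n (g x) (g y).

Lemma i0_lt : i0.+2 <= ns k0. Proof. lia. Qed.
Lemma i0_pos : 0 < i0. Proof. lia. Qed.
Lemma k0_n3 : ns k0 != 3. Proof. lia. Qed.

Definition comp (x : V) := (tag x, (tag x == k0) && (i0 < idx x)).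
Definition counted (x : V) := ~~ ((ns (tag x) == 3) && (idx x == 2)).

Lemma neqv x : x != v -> tag x = k0 -> idx x != i0.
Proof.
move=> xv tk; apply: contra xv => /eqP ii; apply/eqP/vx_eq.
  by rewrite tk.
by rewrite ii mkv_idx //; have := i0_lt; lia.
Qed.

Lemma mkv_neqv k p : p < ns k -> ~~ ((k == k0) && (p == i0)) -> mkv k p != v.
Proof.
move=> hp; apply: contra => /eqP E.
have := congr1 (@idx _ _) E; have := congr1 tag E.
rewrite !mkv_tag !mkv_idx //; last by have := i0_lt; lia.
by move=> -> ->; rewrite !eqxx.
Qed.

Lemma adj_comp x y : x != v -> y != v -> e x y -> comp x = comp y.
Proof.
move=> xv yv; rewrite eE => /andP [/eqP tk hi]; rewrite /comp -tk; congr pair.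
case: (eqVneq (tag x) k0) => //= tk0.
have := neqv xv tk0; have := neqv yv (etrans (esym tk) tk0); move: hi; lia.
Qed.

Lemma isoP (a b : V) : a != v -> tag a != tag b -> (forall z, z != v -> e a z = e b z) ->
   ((idx a).+1 < ns (tag a) -> ~~ ((tag a == k0) && ((idx a).+1 == i0)) -> False) /\
   (0 < idx a -> ~~ ((tag a == k0) && ((idx a).-1 == i0)) -> False).
Proof.
move=> av tab Tab; split => h1 h2.
  move: (Tab _ (mkv_neqv h1 h2)); rewrite !e_mkv // !eqxx /= eq_sym (negbTE tab).
  by [].
have h1' : (idx a).-1 < ns (tag a) by have := idx_lt a; lia.
move: (Tab _ (mkv_neqv h1' h2)); rewrite !e_mkv // prednK // !eqxx orbT /= eq_sym (negbTE tab).
by [].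
Qed.

Lemma twins x y : x != v -> y != v -> (forall z, z != v -> e x z = e y z) ->
  comp x = comp y /\ (counted x -> counted y -> x = y).
Proof.
move=> xv yv T.
case: (eqVneq (tag x) (tag y)) => tk.
  case: (eqVneq (idx x) (idx y)) => ti.
    by have xy := vx_eq tk ti; subst y.
  have [] := @twin_arith (ns (tag x)) (idx x) (idx y) i0 (tag x == k0).
  - move=> p hp hpa; have := T _ (mkv_neqv hp hpa).
    by rewrite !e_mkv // -tk eqxx.
  - exact: idx_lt.
  - by rewrite tk; exact: idx_lt.
  - by move/eqP/(neqv xv).
  - by rewrite tk => /eqP/(neqv yv).
  - exact: ti.
  - by move/eqP => ->.
  move=> nk [N3 H2]; split.
    by rewrite /comp -tk (negbTE nk).
  rewrite /counted -tk N3 /=; case: H2 => ->; by rewrite eqxx.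
exfalso.
have T' : forall z, z != v -> e y z = e x z by move=> z zv; rewrite T.
have [x1 x2] := isoP xv tk T.
have tk' : tag y != tag x by rewrite eq_sym.
have [y1 y2] := isoP yv tk' T'.
have hx := idx_lt x; have hy := idx_lt y.
case: (eqVneq (tag x) k0) => tx.
  have ty : tag y != k0 by rewrite -tx eq_sym.
  rewrite (negbTE ty) /= in y1 y2.
  have ny : ns (tag y) = 1.
    case: (ltnP (idx y).+1 (ns (tag y))) => h; first by exfalso; apply: (y1 h).
    case: (posnP (idx y)) => h0; last by exfalso; apply: (y2 h0). have := hpos (tag y); lia.
  rewrite tx eqxx /= in x1 x2; rewrite tx in hx.
  have := neqv xv tx => xi.
  have /hiso/(_ (tag y)) : (ns k0 == 4) || (ns k0 == 6).
    apply: (@iso_arith (ns k0) i0 (idx x)) => //.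
  by rewrite ny.
rewrite (negbTE tx) /= in x1 x2.
have nx : ns (tag x) = 1.
  case: (ltnP (idx x).+1 (ns (tag x))) => h; first by exfalso; apply: (x1 h).
  case: (posnP (idx x)) => h0; last by exfalso; apply: (x2 h0). have := hpos (tag x); lia.
case: (eqVneq (tag y) k0) => ty.
  rewrite ty eqxx /= in y1 y2; rewrite ty in hy.
  have := neqv yv ty => yi.
  have /hiso/(_ (tag x)) : (ns k0 == 4) || (ns k0 == 6).
    apply: (@iso_arith (ns k0) i0 (idx y)) => //.
  by rewrite nx.
rewrite (negbTE ty) /= in y1 y2.
have ny : ns (tag y) = 1.
  case: (ltnP (idx y).+1 (ns (tag y))) => h; first by exfalso; apply: (y1 h).
  case: (posnP (idx y)) => h0; last by exfalso; apply: (y2 h0). have := hpos (tag y); lia.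
by move: tk; rewrite (hmult nx ny) eqxx.
Qed.


Definition Z := {k : 'I_m & 'I_(cc (ns k))}.
Definition zj (z : Z) : nat := tagged z.
Definition isslot (z : Z) :=
  if tag z == k0 then (zj z == i0) || (zj z == ns k0) else (zj z == (cc (ns (tag z))).-1).
Definition rep (z : Z) : V :=
  if (tag z == k0) && (zj z == ns k0) then mkv k0 (ns k0).-1 else mkv (tag z) 0.
Definition vtx (z : Z) : V := mkv (tag z) (zj z).

Lemma z_eq (z1 z2 : Z) : tag z1 = tag z2 -> zj z1 = zj z2 -> z1 = z2.
Proof.
case: z1 => k i; case: z2 => k' j /= ek; subst k' => eij.
by congr existT; apply: val_inj.
Qed.

Lemma zj_lt z : zj z < cc (ns (tag z)).
Proof. exact: ltn_ord. Qed.

Lemma rep_neqv z : rep z != v.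
Proof.
have := i0_lt; have := i0_pos => h1 h2.
rewrite /rep; case: ifP => _; apply: mkv_neqv.
- have := hpos k0; lia.
- rewrite eqxx /=; lia.
- exact: hpos.
- apply/negP => /andP [_ /eqP]; lia.
Qed.

Lemma rep_comp z : isslot z -> comp (rep z) = (tag z, (tag z == k0) && (zj z == ns k0)).
Proof.
have := i0_lt; have := i0_pos => h1 h2.
rewrite /isslot /rep /comp; case: (eqVneq (tag z) k0) => [tk|tk] /= hs.
  case: (eqVneq (zj z) (ns k0)) => hz /=.
    rewrite eqxx mkv_idx; last by have := hpos k0; lia.
    by rewrite tk; congr pair; lia.
  rewrite mkv_idx; last exact: hpos.
  congr pair; lia.
by rewrite (negbTE tk).
Qed.

Lemma vtx_prop z : ~~ isslot z ->
  [/\ zj z < ns (tag z), vtx z != v, idx (vtx z) = zj z & counted (vtx z)].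
Proof.
have := i0_lt; have := i0_pos; have := k0_n3; have := zj_lt z => h0 h1 h2 h3.
rewrite /isslot /counted /vtx => hs.
have lt : zj z < ns (tag z).
  move: hs h0; rewrite /cc; case: (eqVneq (tag z) k0) => [tk|tk] /=.
    rewrite tk; case: ifP; lia.
  case: ifP; lia.
split => //.
- apply: mkv_neqv => //; move: hs; case: (eqVneq (tag z) k0) => //= _; lia.
- by rewrite mkv_idx.
- rewrite mkv_idx // mkv_tag; move: hs h0; rewrite /cc.
  case: (eqVneq (tag z) k0) => [tk|tk] /=; rewrite ?tk; case: ifP; lia.
Qed.

Definition ymax (r : V) : V := [arg max_(y > r | (y != v) && (comp y == comp r)) g y].

Lemma ymaxP r : r != v -> [/\ ymax r != v, comp (ymax r) = comp r &
  forall y, y != v -> comp y = comp r -> g y <= g (ymax r)].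
Proof.
move=> rv; rewrite /ymax; case: arg_maxnP => [|y /andP [yv /eqP cy] H].
  by rewrite rv eqxx.
by split => // w wv cw; apply: H; rewrite wv cw eqxx.
Qed.

Definition F (z : Z) : nat := if isslot z then (g (ymax (rep z))).+1 else g (vtx z).

Lemma F_lt z : F z < n.+1.
Proof. by rewrite /F; case: ifP => _; rewrite ltnS // ltnW. Qed.

Lemma g_twin x y : x != v -> y != v -> g x = g y :> nat -> forall z, z != v -> e x z = e y z.
Proof. by move=> xv yv /val_inj E z zv; rewrite !hg // E. Qed.

Lemma slot_vtx z1 z2 : isslot z1 -> ~~ isslot z2 -> (g (ymax (rep z1))).+1 = g (vtx z2) -> False.
Proof.
move=> s1 s2 E.
have [yv cy ym] := ymaxP (rep_neqv z1).
have [_ xv _ _] := vtx_prop s2.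
have ad : e (ymax (rep z1)) (vtx z2) by rewrite hg // /path_rel E eqxx.
have := ym _ xv; rewrite -(adj_comp yv xv ad) cy => /(_ erefl); lia.
Qed.

Lemma F_inj : injective F.
Proof.
have := i0_lt => h1.
move=> z1 z2; rewrite /F.
case: (boolP (isslot z1)) => s1; case: (boolP (isslot z2)) => s2.
- move=> [] E.
  have [yv1 cy1 _] := ymaxP (rep_neqv z1).
  have [yv2 cy2 _] := ymaxP (rep_neqv z2).
  have [C _] := twins yv1 yv2 (g_twin yv1 yv2 E).
  move: C; rewrite cy1 cy2 !rep_comp // => -[ta fa].
  apply: z_eq => //; move: s1 s2 fa; rewrite /isslot -ta.
  case: (tag z1 == k0) => /=; lia.
- by move=> E; case: (slot_vtx s1 s2 E).
- by move=> E; case: (slot_vtx s2 s1 (esym E)).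
- move=> E.
  have [l1 xv1 i1 c1] := vtx_prop s1.
  have [l2 xv2 i2 c2] := vtx_prop s2.
  have [_ X] := twins xv1 xv2 (g_twin xv1 xv2 E).
  have XE := X c1 c2.
  apply: z_eq; first by have := congr1 tag XE.
  by rewrite -i1 -i2 XE.
Qed.

Lemma count_bound : \sum_(k < m) cc (ns k) <= n.+1.
Proof.
have inj : injective (fun z => Ordinal (F_lt z)).
  by move=> z1 z2 /(congr1 val) /= /F_inj.
have := leq_card _ inj; rewrite card_ord card_tagged sumnE big_map big_enum /=.
by under eq_bigr => k _ do rewrite card_ord.
Qed.

End Count.

Lemma pos_arith (N a b o : nat) : a < N -> b < N ->
  ((a.+1 == b) || (b.+1 == a)) =
  ((o + (if (N == 3) && (a == 2) then 0 else a)).+1 == o + (if (N == 3) && (b == 2) then 0 else b))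
  || ((o + (if (N == 3) && (b == 2) then 0 else b)).+1 == o + (if (N == 3) && (a == 2) then 0 else a)).
Proof.
move=> ha hb; case: (boolP ((N == 3) && (a == 2))) => H1;
  case: (boolP ((N == 3) && (b == 2))) => H2; lia.
Qed.

Lemma sep_arith (o1 p1 c1 o2 p2 : nat) : p1.+2 <= c1 -> o1 + c1 <= o2 ->
  false = ((o1 + p1).+1 == o2 + p2) || ((o2 + p2).+1 == o1 + p1).
Proof. lia. Qed.

Section Layout.
Variables (m : nat) (ns : 'I_m -> nat).
Hypothesis hpos : forall k, 0 < ns k.
Local Notation V := {k : 'I_m & 'I_(ns k)}.
Local Notation e := (forest_rel m ns).
Variables (n : nat) (hn : 0 < n).
Hypothesis hsum : \sum_(k < m) cc (ns k) <= n.+1.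

Definition ns' (l : nat) := oapp ns 0 (insub l).
Definition off (l : nat) := \sum_(0 <= q < l) cc (ns' q).
Definition pos (x : V) := if (ns (tag x) == 3) && (idx x == 2) then 0 else idx x.

Lemma ns'_val (k : 'I_m) : ns' k = ns k.
Proof. by rewrite /ns' valK. Qed.

Lemma off_rec l : off l.+1 = off l + cc (ns' l).
Proof. by rewrite /off big_nat_recr. Qed.

Lemma off_mono a b : a <= b -> off a <= off b.
Proof. by move=> ab; rewrite /off (big_cat_nat (leq0n a) ab) leq_addr. Qed.

Lemma off_m : off m = \sum_(k < m) cc (ns k).
Proof. by rewrite /off big_mkord; apply: eq_bigr => k _; rewrite ns'_val. Qed.

Lemma pos_le (x : V) : (pos x).+2 <= cc (ns (tag x)).
Proof. have := idx_lt x; rewrite /pos /cc; case: ifP; case: ifP; lia. Qed.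

Lemma lay_lt (x : V) : off (tag x) + pos x < n.
Proof.
have := off_mono (ltn_ord (tag x)); rewrite off_rec ns'_val off_m.
have := pos_le x; lia.
Qed.

Definition lay (x : V) : 'I_n := Ordinal (lay_lt x).

Lemma lay_hom : full_hom e (path_rel n) lay.
Proof.
move=> x y; rewrite /path_rel /= eE.
case: (eqVneq (tag x) (tag y)) => tk /=.
  have hy := idx_lt y; rewrite -tk in hy; have hx := idx_lt x.
  rewrite /pos -tk /=.
  exact: pos_arith.
case: (ltngtP (tag x) (tag y)) => h.
- have := off_mono h; rewrite off_rec ns'_val => h'.
  exact: (@sep_arith (off (tag x)) (pos x) _ (off (tag y)) (pos y) (pos_le x) h').
- have := off_mono h; rewrite off_rec ns'_val => h'.
  by rewrite orbC; exact: (@sep_arith (off (tag y)) (pos y) _ (off (tag x)) (pos x) (pos_le y) h').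
- by move: tk; rewrite (val_inj h) eqxx.
Qed.

Lemma layout_col : full_colourable e (path_rel n).
Proof. by exists lay; exact: lay_hom. Qed.

End Layout.

Theorem lemma2p4 (m : nat) (ns : 'I_m -> nat) (n : nat) :
  (forall k, 0 < ns k) -> 0 < n ->
  min_obstruction (forest_rel m ns) (path_rel n) ->
  [/\ mult ns 1 <= 1,
      (forall k, ns k \in [:: 1; 2; 4; 6]) &
      ((exists k, (ns k == 4) || (ns k == 6)) -> mult ns 1 = 1)].
Proof.
move=> hpos hn [nc hmin].
have irr := @e_irr m ns; have sym := @e_sym m ns.
have pirr := @pr_irr n; have psym := @pr_sym n.
have Hv : forall v, full_colourable (induced _ (forest_rel m ns) (setT :\ v)) (path_rel n).
  by move=> v; apply: hmin; apply: properD1; rewrite inE.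
have iso_v : forall k, ns k = 1 -> forall y, forest_rel m ns (mkv hpos k 0) y = false.
  move=> k h y; rewrite e_sym e_mkv ?h //; have := idx_lt y.
  case: (eqVneq (tag y) k) => [->|] //=; rewrite h; lia.
have m1 : mult ns 1 <= 1.
  rewrite leqNgt; apply/negP; rewrite /mult => /card_gt1P [k1 [k2 [h1 h2 k12]]].
  rewrite !inE in h1 h2.
  apply: nc; apply: (@twin_ext _ _ _ _ (mkv hpos k1 0) (mkv hpos k2 0)) => //.
  - by apply: contra k12 => /eqP E; have := congr1 tag E; rewrite !mkv_tag => ->.
  - by move=> y yv; rewrite !iso_v //; apply/eqP.
have hmult : forall k k', ns k = 1 -> ns k' = 1 -> k = k'.
  move=> k k' a b; apply/eqP; move: m1; apply: contraLR; rewrite -ltnNge => kk.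
  by apply/card_gt1P; exists k, k'; rewrite !inE a b.
have cnt : forall k0 i0,
    (ns k0 == 4) && (i0 == 2) || (ns k0 == 6) && (i0 == 1) || (4 < ns k0) && (ns k0 != 6) && (i0 == 2) ->
    ((ns k0 == 4) || (ns k0 == 6) -> forall k, ns k != 1) -> False.
  move=> k0 i0 hk hiso.
  have [g hg] := ext_hom (Ordinal hn) (Hv (mkv hpos k0 i0)).
  have hg' : forall x y, x != mkv hpos k0 i0 -> y != mkv hpos k0 i0 ->
      forest_rel m ns x y = path_rel n (g x) (g y).
    by move=> x y xv yv; apply: hg; rewrite !inE ?xv ?yv.
  apply: nc; apply: (layout_col hn).
  exact: (count_bound hk hmult hiso hg').
split => //.
- move=> k; have := hpos k; case: (eqVneq (ns k) 3) => [h3|n3] hk.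
    exfalso; apply: nc.
    apply: (@twin_ext _ _ _ _ (mkv hpos k 0) (mkv hpos k 2)) => //.
    + apply/negP => /eqP E; have := congr1 (@idx _ _) E.
      by rewrite !mkv_idx ?h3.
    + move=> y yv; rewrite e_sym [in RHS]e_sym !e_mkv ?h3 //.
      have := idx_lt y; case: (eqVneq (tag y) k) => [->|] //=; rewrite h3; lia.
  apply/negPn/negP => H; rewrite !inE in H.
  apply: (cnt k 2); first lia.
  move=> /orP []; lia.
- move=> [k hk]; apply/eqP; rewrite eqn_leq m1 /= lt0n; apply/negP => /eqP m0.
  apply: (cnt k (if ns k == 4 then 2 else 1)).
    by case: (eqVneq (ns k) 4) => h4; move: hk; lia.
  move=> _ k'; apply/negP => /eqP h.
  have : 0 < mult ns 1 by apply/card_gt0P; exists k'; rewrite inE h.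
  by rewrite m0.
Qed.
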